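(* Let $(m,n)$ be coprime positive integers, $\gamma\in D_{m,n}$, and $(r_h,r_v)\in O(\gamma)$, where $r_h$ is the horizontal step ending at $(a,b)$ and $r_v$ is the vertical step starting at $(a',b')$. Then: (1) $l(a-1,b)$ intersects $r_v$ if and only if $-n< n(a'-a)-m(b'-b)< m-n$; (2) $l(a',b'+1)$ intersects $r_h$ if and only if $m-n< n(a'-a)-m(b'-b)< m$. In particular the conditions in (1) and (2) cannot hold simultaneously. Moreover, $(r_h,r_v)\in H(\gamma)$ if and only if $l(a-1,b)$ intersects $r_v$ or $l(a',b'+1)$ intersects $r_h$.
   Context: An $(m,n)$-Dyck path is a lattice path from $(0,0)$ to $(m,n)$ of $m$ horizontal unit steps $(1,0)$ and $n$ vertical unit steps $(0,1)$ lying weakly above $y=(n/m)x$; $D_{m,n}$ is the set of them. For a point $p$, $l(p)$ denotes the line through $p$ parallel to $y=(n/m)x$ (a ''parallel line''). Steps are regarded as closed unit segments. $O(\gamma)$ is the set of pairs $(r_h,r_v)$ with $r_h$ a horizontal step and $r_v$ a vertical step of $\gamma$, $r_v$ appearing after $r_h$ along $\gamma$; $H(\gamma)$ is the set of pairs in $O(\gamma)$ for which some parallel line intersects both $r_h$ and $r_v$. *)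

(* Defs.v *)
From HB Require Import structures.
From mathcomp Require Import all_boot all_order all_algebra.
Set Implicit Arguments. Unset Strict Implicit. Unset Printing Implicit Defensive.
Import Order.TTheory GRing.Theory Num.Theory.
Local Open Scope ring_scope.

(* A lattice path is a word g : seq bool; true = horizontal step (1,0),
   false = vertical step (0,1).  Step k (k < size g) goes from [pt g k]
   to [pt g k.+1].  Points of the plane are in rat * rat. *)

Definition pt (g : seq bool) (k : nat) : rat * rat :=
  ((count id (take k g))%:R, (count negb (take k g))%:R).

Definition step (g : seq bool) (k : nat) : (rat * rat) * (rat * rat) :=
  (pt g k, pt g k.+1).

Definition on_seg (s : (rat * rat) * (rat * rat)) (q : rat * rat) : Prop :=
  exists t : rat, 0 <= t <= 1 /\
    q = (s.1.1 + t * (s.2.1 - s.1.1), s.1.2 + t * (s.2.2 - s.1.2)).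

Definition on_pline (m n : nat) (p q : rat * rat) : Prop :=
  exists s : rat, q = (p.1 + s * m%:R, p.2 + s * n%:R).

Definition meets (m n : nat) (p : rat * rat) (s : (rat * rat) * (rat * rat)) : Prop :=
  exists q, on_pline m n p q /\ on_seg s q.

Definition dyck (m n : nat) (g : seq bool) : Prop :=
  [/\ count id g = m, count negb g = n &
      forall k q, (k < size g)%N -> on_seg (step g k) q ->
        n%:R * q.1 <= m%:R * q.2].

Definition inO (g : seq bool) (i j : nat) : Prop :=
  [/\ (i < j)%N, (j < size g)%N, nth false g i & ~~ nth true g j].

Definition inH (m n : nat) (g : seq bool) (i j : nat) : Prop :=
  inO g i j /\ exists p, meets m n p (step g i) /\ meets m n p (step g j).

(* Main.v *)
Require Import Defs.
From HB Require Import structures.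
From mathcomp Require Import all_boot all_order all_algebra.
From mathcomp Require Import ring lra zify.
Import Order.TTheory GRing.Theory Num.Theory.
Local Open Scope ring_scope.

Lemma count_take_mono (T : Type) (p : pred T) (s : seq T) k l :
  (k <= l)%N -> (count p (take k s) <= count p (take l s))%N.
Proof.
move=> kl; rewrite -(subnKC kl) takeD count_cat; exact: leq_addr.
Qed.

Lemma count_take_le (T : Type) (p : pred T) (s : seq T) k :
  (count p (take k s) <= count p s)%N.
Proof. by rewrite -{2}(cat_take_drop k s) count_cat leq_addr. Qed.

Definition F (m n : nat) (p : rat * rat) : rat := n%:R * p.1 - m%:R * p.2.

Lemma meets_F (m n : nat) p s : (0 < m)%N ->
  meets m n p s <->
  exists t : rat, 0 <= t <= 1 /\ F m n p = F m n s.1 + t * (F m n s.2 - F m n s.1).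
Proof.
move=> m0; have mR : (m%:R : rat) != 0 by rewrite pnatr_eq0 -lt0n.
split.
- move=> [q [[u E1] [t [ht E2]]]]; exists t; split => //.
  have H1 : F m n q = F m n p by rewrite E1 /F /=; ring.
  rewrite -H1 E2 /F /=; ring.
- move=> [t [ht hF]].
  set q := (s.1.1 + t * (s.2.1 - s.1.1), s.1.2 + t * (s.2.2 - s.1.2)).
  exists q; split; last by exists t.
  exists ((q.1 - p.1) / m%:R).
  move: hF; rewrite /F /q /= => hF.
  congr (_, _); first by field.
  have key : n%:R * (s.1.1 + t * (s.2.1 - s.1.1) - p.1) =
              m%:R * (s.1.2 + t * (s.2.2 - s.1.2) - p.2) :> rat.
    have hp : n%:R * p.1 = m%:R * p.2 + ((n%:R * s.1.1 - m%:R * s.1.2) + t * ((n%:R * s.2.1 - m%:R * s.2.2) - (n%:R * s.1.1 - m%:R * s.1.2))) by rewrite -hF; ring.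
    rewrite [in LHS]mulrDr [in LHS]mulrN hp; ring.
  have -> : forall z : rat, z / m%:R * n%:R = n%:R * z / m%:R by move=> z; field.
  by rewrite key; field.
Qed.

Lemma ex_t_pos (c f0 D : rat) : 0 < D ->
  (exists t : rat, 0 <= t <= 1 /\ c = f0 + t * D) <-> f0 <= c <= f0 + D.
Proof.
move=> D0; split.
- move=> [t [/andP [t0 t1] ->]].
  have h1 : 0 <= t * D by rewrite mulr_ge0 // ltW.
  have h2 : t * D <= D by rewrite ler_piMl // ltW.
  apply/andP; split; lra.
- move=> /andP [h1 h2]; exists ((c - f0) / D); split.
  + apply/andP; split; first by apply: divr_ge0; [lra | exact: ltW].
    rewrite ler_pdivrMr // mul1r; lra.
  + field; lra.
Qed.

Lemma ex_t_neg (c f0 D : rat) : 0 < D ->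
  (exists t : rat, 0 <= t <= 1 /\ c = f0 + t * (- D)) <-> f0 - D <= c <= f0.
Proof.
move=> D0; have := @ex_t_pos c (f0 - D) D D0.
have -> : f0 - D + D = f0 by ring.
move=> <-.
split; move=> [t [/andP [t0 t1] ->]]; exists (1 - t); split;
  try (apply/andP; split; lra); ring.
Qed.

Lemma nat_arith (m n A A' B B' : nat) : (0 < m)%N -> (0 < n)%N -> coprime m n ->
  (1 <= A)%N -> (A <= A')%N -> (A' <= m)%N -> (B <= B')%N -> (B'.+1 <= n)%N ->
  [/\ n * A' + m * B + n <> n * A + m * B',
      n * A' + m * B + n = n * A + m * B' + m -> A = 1%N /\ B = 0%N &
      n * A' + m * B <> n * A + m * B' + m]%N.
Proof.
move=> m0 n0 cop h1 h2 h3 h4 h5; split.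
- move=> E.
  have E2 : (n * (A' + 1 - A) = m * (B' - B))%N by nia.
  have : (m %| n * (A' + 1 - A))%N by rewrite E2 dvdn_mulr.
  rewrite Gauss_dvdr // => /dvdnP [k Hk].
  have k1 : k = 1%N by nia.
  subst k; nia.
- move=> E.
  have E2 : (n * (A' + 1 - A) = m * (B' + 1 - B))%N by nia.
  have : (m %| n * (A' + 1 - A))%N by rewrite E2 dvdn_mulr.
  rewrite Gauss_dvdr // => /dvdnP [k Hk].
  have k1 : k = 1%N by nia.
  subst k; nia.
- move=> E.
  have E2 : (n * (A' - A) = m * (B' + 1 - B))%N by nia.
  have : (m %| n * (A' - A))%N by rewrite E2 dvdn_mulr.
  rewrite Gauss_dvdr // => /dvdnP [k Hk].
  have k0 : k = 0%N by nia.
  subst k; nia.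
Qed.

Theorem lemma3p8 (m n : nat) (g : seq bool) (i j : nat) :
  (0 < m)%N -> (0 < n)%N -> coprime m n -> dyck m n g -> inO g i j ->
  let a := (pt g i.+1).1 in let b := (pt g i.+1).2 in
  let a' := (pt g j).1 in let b' := (pt g j).2 in
  let d := n%:R * (a' - a) - m%:R * (b' - b) in
  (meets m n (a - 1, b) (step g j) <-> - n%:R < d < m%:R - n%:R) /\
  (meets m n (a', b' + 1) (step g i) <-> m%:R - n%:R < d < m%:R) /\
  ~ ((- n%:R < d < m%:R - n%:R) /\ (m%:R - n%:R < d < m%:R)) /\
  (inH m n g i j <->
     meets m n (a - 1, b) (step g j) \/ meets m n (a', b' + 1) (step g i)).
Proof.
move=> m0 n0 cop [hm hn hd] hO; case: (hO) => hij hjs hi hj.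
have his : (i < size g)%N by apply: ltn_trans hij hjs.
set A0 := count id (take i g); set B := count negb (take i g).
set A' := count id (take j g); set B' := count negb (take j g).
have Ei : pt g i.+1 = ((A0 + 1)%N%:R, B%:R).
  by rewrite /pt (take_nth false) // -cats1 !count_cat hi /= !addn0.
have Ei0 : pt g i = (A0%:R, B%:R) by [].
have Ej : pt g j.+1 = (A'%:R, (B' + 1)%N%:R).
  by rewrite /pt (take_nth true) // -cats1 !count_cat (negbTE hj) /= !addn0 ?addn1.
have Ej0 : pt g j = (A'%:R, B'%:R) by [].
have hA : (A0 + 1 <= A')%N.
  have := @count_take_mono _ id g _ _ hij; by rewrite (take_nth false) // -cats1 count_cat hi /= addn0.
have hB : (B <= B')%N.
  apply: count_take_mono; exact: ltnW.
have hA' : (A' <= m)%N by rewrite -hm count_take_le.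
have hB' : (B'.+1 <= n)%N.
  have := @count_take_le _ negb g j.+1.
  by rewrite (take_nth true) // -cats1 count_cat (negbTE hj) /= hn addn0 addn1.
have [nA1 nA2 nA3] := @nat_arith m n (A0+1) A' B B' m0 n0 cop (leq_addl A0 1) hA hA' hB hB'.
move=> a b a' b' d.
have ea : a = A0%:R + 1 by rewrite /a Ei natrD.
have eb : b = B%:R by rewrite /b Ei.
have ea' : a' = A'%:R by rewrite /a' Ej0.
have eb' : b' = B'%:R by rewrite /b' Ej0.
have mR : (0 : rat) < m%:R by rewrite ltr0n.
have nR : (0 : rat) < n%:R by rewrite ltr0n.
have d1 : d != - n%:R.
  apply/eqP => E; apply: nA1; apply/eqP; rewrite -(eqr_nat rat) !natrD !natrM.
  apply/eqP; move: E; rewrite /d ea eb ea' eb' natrD; lra.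
have d3 : d != m%:R.
  apply/eqP => E; apply: nA3; apply/eqP; rewrite -(eqr_nat rat) !natrD !natrM.
  apply/eqP; move: E; rewrite /d ea eb ea' eb' natrD; lra.
have d2 : d != m%:R - n%:R.
  apply/eqP => E.
  have [HA HB] : (A0 + 1)%N = 1%N /\ B = 0%N.
    apply: nA2; apply/eqP; rewrite -(eqr_nat rat) !natrD !natrM.
    apply/eqP; move: E; rewrite /d ea eb ea' eb' natrD; lra.
  have := hd i (pt g i.+1) his.
  have -> : (n%:R * (pt g i.+1).1 <= m%:R * (pt g i.+1).2) = false.
    rewrite Ei HA HB /= mulr0 mulr1; apply/negbTE; rewrite -ltNge; exact: nR.
  move=> H; suff : false by [].
  apply: H; exists 1; split; first by rewrite ler01 lexx.
  by rewrite /step /= !mul1r !subrKC.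
have Mi : forall p, meets m n p (step g i) <->
    F m n (pt g i) <= F m n p <= F m n (pt g i) + n%:R.
  move=> p; rewrite meets_F // -ex_t_pos //=.
  have -> : F m n (pt g i.+1) - F m n (pt g i) = n%:R.
    by rewrite /F Ei Ei0 /= natrD; ring.
  by [].
have Mj : forall p, meets m n p (step g j) <->
    F m n (pt g j) - m%:R <= F m n p <= F m n (pt g j).
  move=> p; rewrite meets_F // -ex_t_neg //=.
  have -> : F m n (pt g j.+1) - F m n (pt g j) = - m%:R.
    by rewrite /F Ej Ej0 /= natrD; ring.
  by [].
have Fi : F m n (pt g i) = n%:R * (a - 1) - m%:R * b.
  by rewrite /F Ei0 ea eb /=; ring.
have Fj : F m n (pt g j) = n%:R * a' - m%:R * b'.
  by rewrite /F Ej0 ea' eb' /=.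
have P1 : meets m n (a - 1, b) (step g j) <-> - n%:R < d < m%:R - n%:R.
  rewrite Mj Fj /F /=; split.
  - move=> /andP [h1 h2].
    have k1 : - n%:R <= d by rewrite /d; lra.
    have k2 : d <= m%:R - n%:R by rewrite /d; lra.
    by rewrite !lt_neqAle k1 k2 eq_sym d1 d2.
  - move=> /andP [h1 h2]; move: h1 h2; rewrite /d => h1 h2; apply/andP; split; lra.
have P2 : meets m n (a', b' + 1) (step g i) <-> m%:R - n%:R < d < m%:R.
  rewrite Mi Fi /F /=; split.
  - move=> /andP [h1 h2].
    have k1 : m%:R - n%:R <= d by rewrite /d; lra.
    have k2 : d <= m%:R by rewrite /d; lra.
    by rewrite !lt_neqAle k1 k2 eq_sym d2 d3.
  - move=> /andP [h1 h2]; move: h1 h2; rewrite /d => h1 h2; apply/andP; split; lra.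
split; first exact: P1.
split; first exact: P2.
split; first by move=> [/andP [_ h1] /andP [h2 _]]; have := lt_trans h2 h1; rewrite ltxx.
split.
- move=> [_ [p [/Mi hi' /Mj hj']]].
  move: hi' hj'; rewrite Fi Fj => /andP [h1 h2] /andP [h3 h4].
  case: (ltrgtP d (m%:R - n%:R)) => hd'.
  + left; apply/P1; apply/andP; split => //.
    rewrite lt_neqAle eq_sym d1 /=; rewrite /d; lra.
  + right; apply/P2; apply/andP; split => //.
    rewrite lt_neqAle d3 /=; rewrite /d; lra.
  + by move/eqP: hd'; rewrite (negbTE d2).
- move=> [H | H].
  + split => //; exists (a - 1, b); split => //.
    apply/Mi; rewrite Fi /F /=; apply/andP; split; lra.
  + split => //; exists (a', b' + 1); split => //.
    apply/Mj; rewrite Fj /F /=; apply/andP; split; lra.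
Qed.
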